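(* For every integer $p \ge 1$ there exist an integer $k$ and a $k$-colourable $(4K_1, C_4, \text{claw})$-free graph $G$ that is not $(k+p)$-mixing.
   Context: All graphs are finite and simple. A $k$-colouring of $G$ is a map $\alpha: V(G)\to\{1,\dots,k\}$ with $\alpha(u)\neq\alpha(v)$ for every edge $uv$; $G$ is $k$-colourable if one exists. The reconfiguration graph $\mathcal{R}_k(G)$ has the $k$-colourings of $G$ as vertices, two being adjacent if they differ on exactly one vertex; $G$ is $k$-mixing if $\mathcal{R}_k(G)$ is connected. A graph is $\mathcal{H}$-free for a set $\mathcal{H}$ of graphs if it contains no induced subgraph isomorphic to any member of $\mathcal{H}$. $4K_1$ is the edgeless graph on 4 vertices, $C_4$ the 4-cycle, and the claw is $K_{1,3}$. *)

(* Defs.v *)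
From mathcomp Require Import all_boot.
Set Implicit Arguments. Unset Strict Implicit. Unset Printing Implicit Defensive.

Definition simple_graph (T : finType) (e : rel T) : Prop :=
  symmetric e /\ irreflexive e.

Definition proper_colouring (T : finType) (e : rel T) (k : nat)
  (a : {ffun T -> 'I_k}) : bool :=
  [forall u, forall v, e u v ==> (a u != a v)].

Definition colourable (T : finType) (e : rel T) (k : nat) : Prop :=
  exists a : {ffun T -> 'I_k}, proper_colouring e a.

Definition recolour_step (T : finType) (e : rel T) (k : nat)
  (a b : {ffun T -> 'I_k}) : bool :=
  [&& proper_colouring e a, proper_colouring e b &
      #|[set v | a v != b v]| == 1].

Definition mixing (T : finType) (e : rel T) (k : nat) : Prop :=
  forall a b : {ffun T -> 'I_k}, proper_colouring e a -> proper_colouring e b ->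
    connect (@recolour_step T e k) a b.

Definition has_induced (T : finType) (e : rel T) (n : nat) (h : rel 'I_n) : Prop :=
  exists f : 'I_n -> T, injective f /\ forall i j, e (f i) (f j) = h i j.

Definition K1x4 : rel 'I_4 := fun _ _ => false.
Definition C4 : rel 'I_4 :=
  fun i j => ((i.+1 %% 4 == j) || (j.+1 %% 4 == i)).
Definition claw : rel 'I_4 :=
  fun i j => (i != j) && ((val i == 0) || (val j == 0)).

Definition free_4K1_C4_claw (T : finType) (e : rel T) : Prop :=
  ~ has_induced e K1x4 /\ ~ has_induced e C4 /\ ~ has_induced e claw.

(* Main.v *)
Require Import Defs.
From mathcomp Require Import all_boot.
From mathcomp Require Import zify.

Set Implicit Arguments. Unset Strict Implicit. Unset Printing Implicit Defensive.

(* Construction: the power of a cycle C_n^r with n = 12p+6, r = 3p+1. *)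
Definition dist (x y : nat) := (x - y) + (y - x).
Definition adjn (p x y : nat) : bool :=
  (0 < dist x y) && ((dist x y <= 3*p+1) || (12*p+6 - (3*p+1) <= dist x y)).
Lemma adjnC p x y : adjn p x y = adjn p y x.
Proof. by rewrite /adjn /dist addnC. Qed.
Lemma adjn_irr p x : adjn p x x = false.
Proof. by rewrite /adjn /dist subnn. Qed.
Lemma adjn_le p x y : x <= y ->
  adjn p x y = (0 < y - x) && ((y - x <= 3*p+1) || (9*p+5 <= y - x)).
Proof. move=> h; rewrite /adjn /dist. have ->: x - y = 0 by lia. rewrite add0n. do 3 f_equal. lia. Qed.

Ltac ord2 x y := let h := fresh in case: (leqP x y) => h;
  [rewrite ?(@adjn_le _ _ _ h) | rewrite ?(adjnC _ x y) ?(@adjn_le _ _ _ (ltnW h))].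

Lemma noC4 p a b c d : a < 12*p+6 -> b < 12*p+6 -> c < 12*p+6 -> d < 12*p+6 ->
  adjn p a b -> adjn p b c -> adjn p c d -> adjn p d a ->
  a <> c -> b <> d ->
  adjn p a c = false -> adjn p b d = false -> False.
Proof.
ord2 a b; ord2 b c; ord2 c d; ord2 d a; ord2 a c; ord2 b d; lia.
Qed.

Lemma no4K1 p x y z w : x < 12*p+6 -> y < 12*p+6 -> z < 12*p+6 -> w < 12*p+6 ->
  x <> y -> x <> z -> x <> w -> y <> z -> y <> w -> z <> w ->
  adjn p x y = false -> adjn p x z = false -> adjn p x w = false ->
  adjn p y z = false -> adjn p y w = false -> adjn p z w = false -> False.
Proof.
ord2 x y; ord2 x z; ord2 x w; ord2 y z; ord2 y w; ord2 z w; lia.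
Qed.

Lemma noclaw p c x y z : c < 12*p+6 -> x < 12*p+6 -> y < 12*p+6 -> z < 12*p+6 ->
  adjn p c x -> adjn p c y -> adjn p c z ->
  x <> y -> x <> z -> y <> z ->
  adjn p x y = false -> adjn p x z = false -> adjn p y z = false -> False.
Proof.
ord2 c x; ord2 c y; ord2 c z; ord2 x y; ord2 x z; ord2 y z; lia.
Qed.

Lemma mod2 u c : u < 2*c -> (u < c /\ u %% c = u) \/ (c <= u /\ u %% c = u - c).
Proof.
move=> hu; case: (ltnP u c) => h; first by left; rewrite modn_small.
right; split => //.
have E : u = (u - c) + c by lia.
rewrite {1}E modnDr modn_small //; lia.
Qed.

Lemma mod3 u m : u < 3*m -> (u %% m = u /\ u < m) \/ (u %% m = u - m /\ m <= u < 2*m)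
   \/ (u %% m = u - 2*m /\ 2*m <= u).
Proof.
move=> hu; case: (ltnP u (2*m)) => h.
  case: (mod2 h) => [[a b]|[a b]]; [left|right; left]; split => //; lia.
right; right; split => //.
have E : u = (u - 2*m) + m + m by lia.
rewrite {1}E !modnDr modn_small //; lia.
Qed.

Lemma gamma_proper p u v : u < 12*p+6 -> v < 12*p+6 ->
  adjn p u v -> u %% (4*p+2) = v %% (4*p+2) -> False.
Proof.
move=> hu hv; rewrite /adjn /dist.
have hu' : u < 3*(4*p+2) by lia.
have hv' : v < 3*(4*p+2) by lia.
case: (mod3 hu') => [[-> ?]|[[-> ?]|[-> ?]]];
case: (mod3 hv') => [[-> ?]|[[-> ?]|[-> ?]]]; lia.
Qed.

Lemma alpha_proper p u v : u < 12*p+6 -> v < 12*p+6 ->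
  adjn p u v -> u %% (5*p+3+p) = v %% (5*p+3+p) -> False.
Proof.
move=> hu hv; rewrite /adjn /dist.
have hu' : u < 2*(5*p+3+p) by lia.
have hv' : v < 2*(5*p+3+p) by lia.
case: (mod2 hu') => [[? ->]|[? ->]]; case: (mod2 hv') => [[? ->]|[? ->]]; lia.
Qed.

Lemma frozen_nat p v j : v < 12*p+6 -> j < 5*p+3+p -> v %% (5*p+3+p) != j ->
  adjn p v j || adjn p v (j + (5*p+3+p)).
Proof.
move=> hv hj.
have hv' : v < 2*(5*p+3+p) by lia.
rewrite /adjn /dist.
case: (mod2 hv') => [[? ->]|[? ->]]; lia.
Qed.

Section Constr.
Variable p : nat.
Hypothesis hp : 1 <= p.

Definition VT : finType := 'I_(12*p+6).
Definition E : rel VT := fun i j => adjn p i j.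
Definition C := 5*p+3+p.

Lemma cpos : 0 < C. Proof. rewrite /C; lia. Qed.

Lemma gam_lt (i : VT) : i %% (4*p+2) < 5*p+3.
Proof. have := @ltn_pmod i (4*p+2) ltac:(lia). lia. Qed.
Lemma gam_lt' (i : VT) : i %% (4*p+2) < 5*p+3+p.
Proof. have := gam_lt i. lia. Qed.

Definition gam : {ffun VT -> 'I_(5*p+3)} := [ffun i : VT => Ordinal (gam_lt i)].
Definition bet : {ffun VT -> 'I_(5*p+3+p)} := [ffun i : VT => Ordinal (gam_lt' i)].
Definition alp : {ffun VT -> 'I_(5*p+3+p)} := [ffun i : VT => Ordinal (@ltn_pmod i _ cpos)].

Lemma gam_proper : proper_colouring E gam.
Proof.
apply/forallP => u; apply/forallP => v; apply/implyP => huv.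
rewrite !ffunE; apply/negP => /eqP [] h.
exact: (gamma_proper (ltn_ord u) (ltn_ord v) huv h).
Qed.

Lemma bet_proper : proper_colouring E bet.
Proof.
apply/forallP => u; apply/forallP => v; apply/implyP => huv.
rewrite !ffunE; apply/negP => /eqP [] h.
exact: (gamma_proper (ltn_ord u) (ltn_ord v) huv h).
Qed.

Lemma alp_proper : proper_colouring E alp.
Proof.
apply/forallP => u; apply/forallP => v; apply/implyP => huv.
rewrite !ffunE; apply/negP => /eqP [] h.
exact: (alpha_proper (ltn_ord u) (ltn_ord v) huv h).
Qed.

Lemma frozen (v : VT) (j : 'I_(5*p+3+p)) : j != alp v ->
  exists u : VT, E v u && (alp u == j).
Proof.
move=> hj.
have hjv : val j < 5*p+3+p := ltn_ord j.
have hne : v %% (5*p+3+p) != val j.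
  apply/eqP => h; move/eqP: hj; apply; apply/val_inj; by rewrite ffunE /= h.
case/orP: (frozen_nat (ltn_ord v) hjv hne) => h.
  have hl : val j < 12*p+6 by lia.
  exists (Ordinal hl); rewrite /E /= h /=; apply/eqP/val_inj.
  by rewrite ffunE /= modn_small.
have hl : val j + (5*p+3+p) < 12*p+6 by lia.
exists (Ordinal hl); rewrite /E /= h /=; apply/eqP/val_inj.
by rewrite ffunE /= modnDr modn_small.
Qed.

Lemma no_step b : ~~ recolour_step E alp b.
Proof.
apply/negP => /and3P [pa pb /cards1P [v hS]].
have hv : alp v != b v.
  have : v \in [set v0 | alp v0 != b v0] by rewrite hS inE.
  by rewrite inE.
have hu : forall u, u != v -> alp u = b u.
  move=> u huv; apply/eqP; apply/negPn; apply/negP => h.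
  have : u \in [set v0 | alp v0 != b v0] by rewrite inE.
  by rewrite hS inE (negbTE huv).
have [u /andP [hvu /eqP hau]] := frozen (j := b v) (v := v) ltac:(by rewrite eq_sym).
have huv : u != v.
  apply/eqP => E0; move: hvu; by rewrite E0 /E adjn_irr.
move/forallP: pb => /(_ v) /forallP /(_ u) /implyP /(_ hvu).
by rewrite -(hu u huv) hau eqxx.
Qed.

Lemma not_mixing : ~ mixing E (5*p+3+p).
Proof.
move=> hm; have := hm alp bet alp_proper bet_proper.
case/connectP => s hpath hlast.
case: s hpath hlast => [|x s] /=.
  move=> _ hb.
  have hl : 4*p+2 < 12*p+6 by lia.
  have := congr1 (fun f : {ffun VT -> 'I_(5*p+3+p)} => val (f (Ordinal hl))) hb.
  rewrite !ffunE /= modnn modn_small /C; lia.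
by case/andP => hs _; move: (no_step x); rewrite hs.
Qed.

Definition i0 : 'I_4 := @Ordinal 4 0 isT.
Definition i1 : 'I_4 := @Ordinal 4 1 isT.
Definition i2 : 'I_4 := @Ordinal 4 2 isT.
Definition i3 : 'I_4 := @Ordinal 4 3 isT.

Lemma injv (f : 'I_4 -> VT) : injective f -> forall i j, i != j -> val (f i) <> val (f j).
Proof. move=> fi i j hij h; move/eqP: hij; apply; apply: fi; exact: val_inj. Qed.

Lemma free : free_4K1_C4_claw E.
Proof.
split; [|split].
- move=> [f [fi hf]].
  have l := fun i => ltn_ord (f i).
  apply: (no4K1 (l i0) (l i1) (l i2) (l i3)
    (injv fi (i:=i0) (j:=i1) isT) (injv fi (i:=i0) (j:=i2) isT) (injv fi (i:=i0) (j:=i3) isT)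
    (injv fi (i:=i1) (j:=i2) isT) (injv fi (i:=i1) (j:=i3) isT) (injv fi (i:=i2) (j:=i3) isT)
    (hf i0 i1) (hf i0 i2) (hf i0 i3) (hf i1 i2) (hf i1 i3) (hf i2 i3)).
- move=> [f [fi hf]].
  have l := fun i => ltn_ord (f i).
  apply: (noC4 (l i0) (l i1) (l i2) (l i3)).
  + by have := hf i0 i1.
  + by have := hf i1 i2.
  + by have := hf i2 i3.
  + by have := hf i3 i0.
  + exact: (injv fi (i:=i0) (j:=i2) isT).
  + exact: (injv fi (i:=i1) (j:=i3) isT).
  + by have := hf i0 i2.
  + by have := hf i1 i3.
- move=> [f [fi hf]].
  have l := fun i => ltn_ord (f i).
  apply: (noclaw (l i0) (l i1) (l i2) (l i3)).
  + by have := hf i0 i1.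
  + by have := hf i0 i2.
  + by have := hf i0 i3.
  + exact: (injv fi (i:=i1) (j:=i2) isT).
  + exact: (injv fi (i:=i1) (j:=i3) isT).
  + exact: (injv fi (i:=i2) (j:=i3) isT).
  + by have := hf i1 i2.
  + by have := hf i1 i3.
  + by have := hf i2 i3.
Qed.

Lemma simple : simple_graph E.
Proof. split; [move=> x y; exact: adjnC | move=> x; exact: adjn_irr]. Qed.

End Constr.

Theorem theorem4 (p : nat) (hp : 1 <= p) :
  exists (k : nat) (T : finType) (e : rel T),
    [/\ simple_graph e, colourable e k, free_4K1_C4_claw e & ~ mixing e (k + p)].
Proof.
exists (5*p+3), (VT p), (@E p); split.
- exact: (@simple p).
- by eexists; apply: gam_proper.
- exact: (@free p).
- exact: (@not_mixing p hp).
Qed.
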